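(* Let $b=1/2$, let $\mathcal B$ be a Hamel basis of $\mathbb{R}$ over $\mathbb{Q}$ with $b\in\mathcal B$, and let $\pi:\mathbb{R}\to[0,1]$ be defined by $\pi(x)=\lambda^x_b-\lfloor\lambda^x_b\rfloor$ if $\lambda^x_b$ is not an odd integer, and $\pi(x)=1$ if $\lambda^x_b$ is an odd integer. Then $\pi$ is a minimal valid function for $I_b$. Equivalently, $\pi\ge 0$ and: (i) $\pi(x)+\pi(y)\ge\pi(x+y)$ for all $x,y\in\mathbb{R}$; (ii) $\pi(x)+\pi(b-x)=1$ for all $x\in\mathbb{R}$; (iii) $\pi(z)=0$ for all $z\in\mathbb{Z}$.
   Context: For $b\in\mathbb{R}\setminus\mathbb{Z}$, $I_b$ is the set of finite-support functions $y:\mathbb{R}\to\mathbb{Z}_+$ (i.e. $y(x)=0$ for all but finitely many $x$) such that $\sum_{x\in\mathbb{R}} y(x)\,x\equiv b \pmod 1$. A function $\pi:\mathbb{R}\to\mathbb{R}_+$ is a (nonnegative) valid function for $I_b$ if $\sum_{x\in\mathbb{R}}\pi(x)y(x)\ge 1$ for every $y\in I_b$. A valid function $\pi':\mathbb{R}\to\mathbb{R}_+$ dominates a valid function $\pi:\mathbb{R}\to\mathbb{R}_+$ if $\pi'\ne\pi$ and $\pi'\le\pi$ pointwise; a valid function $\pi:\mathbb{R}\to\mathbb{R}_+$ is minimal if it is not dominated by any valid function $\mathbb{R}\to\mathbb{R}_+$. (By Gomory–Johnson, a function $\pi:\mathbb{R}\to\mathbb{R}_+$ is minimal iff it satisfies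 (i), (ii), (iii).) A Hamel basis is a basis of $\mathbb{R}$ as a vector space over $\mathbb{Q}$; for $x\in\mathbb{R}$, $\lambda^x_b\in\mathbb{Q}$ denotes the coefficient of the basis element $b$ in the unique expression of $x$ as a finite rational linear combination of elements of $\mathcal B$. *)

(* Defs.v *)
From Stdlib Require Import Reals Lra Lia ZArith QArith Qround Qreals List.
Import ListNotations.
Open Scope R_scope.

Definition lincomb (l : list (R * Q)) : R :=
  fold_right (fun p acc => Q2R (snd p) * fst p + acc) 0 l.

Definition in_basis (B : R -> Prop) (l : list (R * Q)) : Prop :=
  forall p, In p l -> B (fst p).

Definition hamel_basis (B : R -> Prop) : Prop :=
  (forall l : list (R * Q),
      in_basis B l -> NoDup (map fst l) -> lincomb l = 0 ->
      forall p, In p l -> (snd p == 0)%Q) /\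
  (forall x : R, exists l : list (R * Q), in_basis B l /\ x = lincomb l).

Definition coef_in (e : R) (l : list (R * Q)) : Q :=
  fold_right (fun p acc => if Req_EM_T (fst p) e then (snd p + acc)%Q else acc) 0%Q l.

(* q is the coefficient lambda^x_e of e in the (unique) expansion of x in B. *)
Definition hamel_coef (B : R -> Prop) (e x : R) (q : Q) : Prop :=
  exists l : list (R * Q), in_basis B l /\ NoDup (map fst l) /\
    x = lincomb l /\ coef_in e l == q.

Definition Q_odd_integer (q : Q) : bool :=
  Qeq_bool (inject_Z (Qfloor q)) q && Z.odd (Qfloor q).

Definition pi_of (lam : R -> Q) (x : R) : R :=
  if Q_odd_integer (lam x) then 1 else Q2R (lam x - inject_Z (Qfloor (lam x))).

Definition covers_support (y : R -> nat) (l : list R) : Prop :=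
  NoDup l /\ forall x, y x <> 0%nat -> In x l.

Definition sumR (l : list R) (f : R -> R) : R :=
  fold_right (fun x acc => f x + acc) 0 l.

Definition in_Ib (b : R) (y : R -> nat) : Prop :=
  exists l, covers_support y l /\
    exists k : Z, sumR l (fun x => INR (y x) * x) - b = IZR k.

Definition valid_fn (b : R) (pi : R -> R) : Prop :=
  (forall x, 0 <= pi x) /\
  forall y, in_Ib b y -> forall l, covers_support y l ->
    sumR l (fun x => pi x * INR (y x)) >= 1.

Definition dominates (b : R) (pi' pi : R -> R) : Prop :=
  valid_fn b pi' /\ pi' <> pi /\ forall x, pi' x <= pi x.

Definition minimal_fn (b : R) (pi : R -> R) : Prop :=
  valid_fn b pi /\ ~ (exists pi', dominates b pi' pi).

(* Main.v *)
Require Import Defs.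
From Stdlib Require Import Reals Lra Lia ZArith QArith Qround Qreals List Permutation FunctionalExtensionality.
Import ListNotations.
Open Scope R_scope.

Definition fQ (q : Q) : R :=
  if Q_odd_integer q then 1 else Q2R (q - inject_Z (Qfloor q)).

Lemma Q2R_inject_Z z : Q2R (inject_Z z) = IZR z.
Proof. unfold Q2R, inject_Z; simpl. rewrite Rinv_1. ring. Qed.

Lemma fQ_spec q m t : Q2R q = IZR m + t -> 0 <= t < 1 ->
  fQ q = if (Req_EM_T t 0) then (if Z.odd m then 1 else 0) else t.
Proof.
  intros Hq Ht.
  assert (Hf : Qfloor q = m).
  { pose proof (Qle_Rle _ _ (Qfloor_le q)) as H1.
    pose proof (Qlt_Rlt _ _ (Qlt_floor q)) as H2.
    rewrite Q2R_inject_Z in H1, H2. rewrite plus_IZR in H2.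
    assert (IZR (Qfloor q) < IZR (m + 1)) by (rewrite plus_IZR; lra).
    assert (IZR m < IZR (Qfloor q + 1)) by (rewrite plus_IZR; lra).
    apply lt_IZR in H. apply lt_IZR in H0. lia. }
  unfold fQ, Q_odd_integer. rewrite Hf.
  destruct (Req_EM_T t 0) as [E|E].
  - assert (Hb : Qeq_bool (inject_Z m) q = true).
    { apply Qeq_bool_iff. apply eqR_Qeq. rewrite Q2R_inject_Z. lra. }
    rewrite Hb. simpl. destruct (Z.odd m); auto.
    rewrite Q2R_minus, Q2R_inject_Z. lra.
  - assert (Hb : Qeq_bool (inject_Z m) q = false).
    { destruct (Qeq_bool (inject_Z m) q) eqn:E2; auto.
      apply Qeq_bool_iff, Qeq_eqR in E2. rewrite Q2R_inject_Z in E2. lra. }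
    rewrite Hb. simpl. rewrite Q2R_minus, Q2R_inject_Z. lra.
Qed.

Lemma decomp q : exists m t, Q2R q = IZR m + t /\ 0 <= t < 1.
Proof.
  exists (Qfloor q), (Q2R q - IZR (Qfloor q)).
  pose proof (Qle_Rle _ _ (Qfloor_le q)) as H1.
  pose proof (Qlt_Rlt _ _ (Qlt_floor q)) as H2.
  rewrite Q2R_inject_Z in H1, H2. rewrite plus_IZR in H2. split; lra.
Qed.

Lemma fQ_ge q m t : Q2R q = IZR m + t -> 0 <= t < 1 -> t <= fQ q /\ fQ q <= 1.
Proof.
  intros H Ht. rewrite (fQ_spec q m t H Ht).
  destruct (Req_EM_T t 0); [destruct (Z.odd m)|]; lra.
Qed.

Lemma fQ_nonneg q : 0 <= fQ q.
Proof. destruct (decomp q) as [m [t [H Ht]]]. destruct (fQ_ge q m t H Ht); lra. Qed.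

Lemma fQ_compat p q : (p == q)%Q -> fQ p = fQ q.
Proof.
  intros E. destruct (decomp q) as [m [t [H Ht]]].
  rewrite (fQ_spec q m t H Ht). apply fQ_spec; auto. rewrite (Qeq_eqR _ _ E); auto.
Qed.

Lemma fQ_sub p q : fQ (p + q) <= fQ p + fQ q.
Proof.
  destruct (decomp p) as [m1 [t1 [H1 Ht1]]].
  destruct (decomp q) as [m2 [t2 [H2 Ht2]]].
  pose proof (fQ_ge _ _ _ H1 Ht1). pose proof (fQ_ge _ _ _ H2 Ht2).
  destruct (Rlt_le_dec (t1 + t2) 1).
  - assert (E : Q2R (p+q) = IZR (m1 + m2) + (t1 + t2)) by (rewrite Q2R_plus, plus_IZR; lra).
    rewrite (fQ_spec _ _ _ E ltac:(lra)).
    destruct (Req_EM_T (t1+t2) 0); [|lra].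
    assert (t1 = 0) by lra. assert (t2 = 0) by lra. subst.
    rewrite (fQ_spec _ _ _ H1 Ht1), (fQ_spec _ _ _ H2 Ht2).
    rewrite Z.odd_add. destruct (Req_EM_T 0 0); [|lra].
    destruct (Z.odd m1), (Z.odd m2); simpl; lra.
  - assert (E : Q2R (p+q) = IZR (m1 + m2 + 1) + (t1 + t2 - 1)) by (rewrite Q2R_plus, !plus_IZR; lra).
    rewrite (fQ_spec _ _ _ E ltac:(lra)).
    destruct (Req_EM_T (t1+t2-1) 0); [destruct (Z.odd _)|]; lra.
Qed.

Lemma fQ_comp q : fQ q + fQ (1 - q) = 1.
Proof.
  destruct (decomp q) as [m [t [H Ht]]].
  rewrite (fQ_spec _ _ _ H Ht).
  destruct (Req_EM_T t 0) as [E|E].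
  - assert (E2 : Q2R (1 - q) = IZR (1 - m) + 0).
    { rewrite Q2R_minus, minus_IZR. replace (Q2R 1) with 1 by (unfold Q2R; simpl; lra). lra. }
    rewrite (fQ_spec _ _ _ E2 ltac:(lra)).
    destruct (Req_EM_T 0 0); [|lra].
    rewrite Z.odd_sub. destruct (Z.odd m); simpl; lra.
  - assert (E2 : Q2R (1 - q) = IZR (- m) + (1 - t)).
    { rewrite Q2R_minus, opp_IZR. replace (Q2R 1) with 1 by (unfold Q2R; simpl; lra). lra. }
    rewrite (fQ_spec _ _ _ E2 ltac:(lra)).
    destruct (Req_EM_T (1 - t) 0); lra.
Qed.

Lemma fQ_int z : fQ (inject_Z (2 * z)) = 0.
Proof.
  assert (E : Q2R (inject_Z (2*z)) = IZR (2*z) + 0) by (rewrite Q2R_inject_Z; lra).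
  rewrite (fQ_spec _ _ _ E ltac:(lra)). destruct (Req_EM_T 0 0); [|lra].
  rewrite Z.odd_mul. reflexivity.
Qed.

Lemma fQ_odd k : fQ (inject_Z (1 + 2 * k)) = 1.
Proof.
  assert (E : Q2R (inject_Z (1 + 2*k)) = IZR (1+2*k) + 0) by (rewrite Q2R_inject_Z; lra).
  rewrite (fQ_spec _ _ _ E ltac:(lra)). destruct (Req_EM_T 0 0); [|lra].
  rewrite Z.odd_add, Z.odd_mul. reflexivity.
Qed.

Lemma lincomb_app l1 l2 : lincomb (l1 ++ l2) = lincomb l1 + lincomb l2.
Proof. induction l1 as [|[r q] l IH]; simpl; [lra|]. rewrite IH; lra. Qed.

Definition negl (l : list (R*Q)) := map (fun p => (fst p, (- snd p)%Q)) l.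

Lemma lincomb_neg l : lincomb (negl l) = - lincomb l.
Proof. induction l as [|[r q] l IH]; simpl; [lra|]. rewrite IH, Q2R_opp; lra. Qed.

Lemma coef_app e l1 l2 : (coef_in e (l1 ++ l2) == coef_in e l1 + coef_in e l2)%Q.
Proof.
  induction l1 as [|[r q] l IH]; simpl; [ring|].
  destruct (Req_EM_T r e); rewrite IH; ring.
Qed.

Lemma coef_neg e l : (coef_in e (negl l) == - coef_in e l)%Q.
Proof.
  induction l as [|[r q] l IH]; simpl; [reflexivity|].
  destruct (Req_EM_T r e); rewrite IH; ring.
Qed.

Lemma in_basis_app B l1 l2 : in_basis B l1 -> in_basis B l2 -> in_basis B (l1 ++ l2).
Proof. unfold in_basis; intros H1 H2 p Hp; apply in_app_or in Hp; destruct Hp; auto. Qed.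

Lemma in_basis_neg B l : in_basis B l -> in_basis B (negl l).
Proof.
  unfold in_basis, negl; intros H p Hp. apply in_map_iff in Hp.
  destruct Hp as [p' [<- Hp']]. simpl. auto.
Qed.

Lemma sumR_ind (K : list R) r g : NoDup K -> In r K ->
  sumR K (fun e => if Req_EM_T r e then g e else 0) = g r.
Proof.
  induction K as [|a K IH]; intros ND Hin; [destruct Hin|].
  inversion ND; subst. simpl. destruct Hin as [->|Hin].
  - destruct (Req_EM_T r r); [|congruence].
    assert (sumR K (fun e => if Req_EM_T r e then g e else 0) = 0).
    { clear - H1. induction K as [|b K IH]; simpl; auto.
      destruct (Req_EM_T r b). subst; simpl in H1; tauto.
      rewrite IH; [lra|]. intro; apply H1; simpl; auto. }
    lra.
  - destruct (Req_EM_T r a); [subst; contradiction|]. rewrite IH; auto; lra.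
Qed.

Lemma sumR_plus (K : list R) f g : sumR K f + sumR K g = sumR K (fun e => f e + g e).
Proof. induction K; simpl; [lra|]. rewrite <- IHK; lra. Qed.

Lemma sumR_ext (K : list R) f g : (forall e, f e = g e) -> sumR K f = sumR K g.
Proof. intros H; induction K; simpl; auto. rewrite H, IHK; auto. Qed.

Lemma lincomb_K l K : NoDup K -> (forall p, In p l -> In (fst p) K) ->
  lincomb l = sumR K (fun e => Q2R (coef_in e l) * e).
Proof.
  intros ND. induction l as [|[r q] l IH]; intros Hin; simpl.
  - clear. induction K; simpl; auto. rewrite IHK. unfold Q2R; simpl. lra.
  - rewrite IH by (intros; apply Hin; simpl; auto).
    assert (Hr : In r K) by (apply (Hin (r,q)); simpl; auto).
    rewrite <- (sumR_ind K r (fun e => Q2R q * e) ND Hr).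
    rewrite sumR_plus. apply sumR_ext. intros e.
    destruct (Req_EM_T r e); [rewrite Q2R_plus|]; lra.
Qed.

Lemma coef_notin e l : ~ In e (map fst l) -> (coef_in e l == 0)%Q.
Proof.
  induction l as [|[r q] l IH]; simpl; intros H; [reflexivity|].
  destruct (Req_EM_T r e); [tauto|]. apply IH; tauto.
Qed.

Lemma lincomb_map K c : lincomb (map (fun e => (e, c e)) K) = sumR K (fun e => Q2R (c e) * e).
Proof. induction K; simpl; auto. rewrite IHK; auto. Qed.

Lemma indep B (HB : hamel_basis B) l : in_basis B l -> lincomb l = 0 ->
  forall e, (coef_in e l == 0)%Q.
Proof.
  intros Hl H0 e.
  set (K := nodup Req_EM_T (map fst l)).
  destruct (in_dec Req_EM_T e (map fst l)) as [Hin|Hn]; [|apply coef_notin; auto].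
  destruct HB as [Hind _].
  set (nl := map (fun e => (e, coef_in e l)) K).
  assert (HK : NoDup K) by apply NoDup_nodup.
  assert (Hnl : map fst nl = K).
  { unfold nl. rewrite map_map. simpl. apply map_id. }
  refine (Hind nl _ _ _ (e, coef_in e l) _).
  - intros p Hp. unfold nl in Hp. apply in_map_iff in Hp. destruct Hp as [x [<- Hx]].
    simpl. unfold K in Hx. apply nodup_In in Hx. apply in_map_iff in Hx.
    destruct Hx as [p [<- Hp]]. apply Hl; auto.
  - rewrite Hnl; auto.
  - unfold nl. rewrite lincomb_map. rewrite <- (lincomb_K l K HK); auto.
    intros p Hp. unfold K. apply nodup_In. apply in_map; auto.
  - unfold nl. apply in_map_iff. exists e. split; auto. unfold K. apply nodup_In; auto.
Qed.

Section Lam.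
Variables (B : R -> Prop) (lam : R -> Q) (HB : hamel_basis B) (Hb : B (1/2))
  (Hlam : forall x, hamel_coef B (1/2) x (lam x)).

Lemma lam_of l x : in_basis B l -> lincomb l = x -> (lam x == coef_in (1/2) l)%Q.
Proof.
  intros Hl Hx. destruct (Hlam x) as [l1 [Hl1 [_ [Hx1 Hc]]]].
  assert (H := indep B HB (l ++ negl l1) (in_basis_app _ _ _ Hl (in_basis_neg _ _ Hl1))
     ltac:(rewrite lincomb_app, lincomb_neg; lra) (1/2)).
  rewrite coef_app, coef_neg in H. rewrite <- Hc.
  apply (Qplus_inj_r _ _ (- coef_in (1/2) l1)). rewrite Qplus_opp_r.
  rewrite <- H. ring.
Qed.

Lemma lam_add x y : (lam (x + y) == lam x + lam y)%Q.
Proof.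
  destruct (Hlam x) as [l1 [Hl1 [_ [Hx1 Hc1]]]].
  destruct (Hlam y) as [l2 [Hl2 [_ [Hx2 Hc2]]]].
  rewrite (lam_of (l1 ++ l2) (x+y)); [| apply in_basis_app; auto | rewrite lincomb_app; lra].
  rewrite coef_app, Hc1, Hc2. reflexivity.
Qed.

Lemma coef_single q : (coef_in (1/2) [((1/2)%R, q)] == q)%Q.
Proof. simpl. destruct (Req_EM_T (1/2) (1/2)); [ring|congruence]. Qed.

Lemma basis_single q : in_basis B [((1/2)%R, q)].
Proof. intros p [<-|[]]; simpl; auto. Qed.

Lemma lam_compl x : (lam (1/2 - x) == 1 - lam x)%Q.
Proof.
  destruct (Hlam x) as [l1 [Hl1 [_ [Hx1 Hc1]]]].
  rewrite (lam_of ([((1/2)%R, 1%Q)] ++ negl l1) (1/2 - x)).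
  - rewrite coef_app, coef_neg, coef_single, Hc1. ring.
  - apply in_basis_app; [apply basis_single | apply in_basis_neg; auto].
  - rewrite lincomb_app, lincomb_neg. simpl. unfold Q2R at 1; simpl. lra.
Qed.

Lemma lam_int z : (lam (IZR z) == inject_Z (2 * z))%Q.
Proof.
  rewrite (lam_of [((1/2)%R, inject_Z (2*z))] (IZR z)).
  - apply coef_single.
  - apply basis_single.
  - unfold lincomb; cbn [fold_right fst snd]. rewrite Q2R_inject_Z, mult_IZR. lra.
Qed.

Lemma lam_half k : (lam (1/2 + IZR k) == inject_Z (1 + 2 * k))%Q.
Proof.
  rewrite (lam_of [((1/2)%R, inject_Z (1 + 2*k))] (1/2 + IZR k)).
  - apply coef_single.
  - apply basis_single.
  - unfold lincomb; cbn [fold_right fst snd]. rewrite Q2R_inject_Z, plus_IZR, mult_IZR. lra.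
Qed.
End Lam.

Lemma sumR_perm l m f : Permutation l m -> sumR l f = sumR m f.
Proof. induction 1; simpl; try lra. Qed.

Definition supp (y : R -> nat) l := filter (fun x => negb (Nat.eqb (y x) 0)) l.

Lemma sumR_filter (y : R -> nat) f l : (forall x, y x = 0%nat -> f x = 0) ->
  sumR l f = sumR (supp y l) f.
Proof.
  intros H. induction l as [|a l IH]; simpl; auto.
  destruct (Nat.eqb (y a) 0) eqn:E; simpl; rewrite IH; auto.
  apply Nat.eqb_eq in E. rewrite (H a E). lra.
Qed.

Lemma sumR_covers y f l m : covers_support y l -> covers_support y m ->
  (forall x, y x = 0%nat -> f x = 0) -> sumR l f = sumR m f.
Proof.
  intros [Hl Cl] [Hm Cm] Hf. rewrite (sumR_filter y f l Hf), (sumR_filter y f m Hf).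
  apply sumR_perm. apply NoDup_Permutation; try (apply NoDup_filter; auto).
  intros x. unfold supp. rewrite !filter_In. split; intros [_ H]; split; auto;
  (apply Cm || apply Cl); intro E; rewrite E in H; discriminate.
Qed.

Theorem mainTheorem1 (B : R -> Prop) (lam : R -> Q)
  (HB : hamel_basis B) (Hb : B (1/2))
  (Hlam : forall x, hamel_coef B (1/2) x (lam x)) :
  minimal_fn (1/2) (pi_of lam) /\
  (forall x, 0 <= pi_of lam x) /\
  (forall x y, pi_of lam x + pi_of lam y >= pi_of lam (x + y)) /\
  (forall x, pi_of lam x + pi_of lam (1/2 - x) = 1) /\
  (forall z : Z, pi_of lam (IZR z) = 0).
Proof.
  assert (Hpi : forall x, pi_of lam x = fQ (lam x)) by reflexivity.
  assert (P0 : forall x, 0 <= pi_of lam x) by (intros; rewrite Hpi; apply fQ_nonneg).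
  assert (P1 : forall x y, pi_of lam x + pi_of lam y >= pi_of lam (x + y)).
  { intros. rewrite !Hpi, (fQ_compat _ _ (lam_add B lam HB Hlam x y)).
    pose proof (fQ_sub (lam x) (lam y)). lra. }
  assert (P2 : forall x, pi_of lam x + pi_of lam (1/2 - x) = 1).
  { intros. rewrite !Hpi, (fQ_compat _ _ (lam_compl B lam HB Hb Hlam x)). apply fQ_comp. }
  assert (P3 : forall z : Z, pi_of lam (IZR z) = 0).
  { intros. rewrite Hpi, (fQ_compat _ _ (lam_int B lam HB Hb Hlam z)). apply fQ_int. }
  assert (Pz : pi_of lam 0 = 0) by apply (P3 0%Z).
  assert (Pn : forall n x, pi_of lam (INR n * x) <= pi_of lam x * INR n).
  { induction n; intros x.
    - simpl. replace (0 * x) with 0 by ring. lra.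
    - rewrite S_INR. replace ((INR n + 1) * x) with (x + INR n * x) by ring.
      specialize (P1 x (INR n * x)). specialize (IHn x). lra. }
  assert (Psum : forall (y : R -> nat) l,
    sumR l (fun x => pi_of lam x * INR (y x)) >= pi_of lam (sumR l (fun x => INR (y x) * x))).
  { intros y l. induction l as [|a l IH]; simpl; [lra|].
    specialize (P1 (INR (y a) * a) (sumR l (fun x => INR (y x) * x))).
    specialize (Pn (y a) a). lra. }
  assert (Valid : valid_fn (1/2) (pi_of lam)).
  { split; auto. intros y [l0 [Hc0 [k Hk]]] l Hc.
    rewrite (sumR_covers y (fun x => INR (y x) * x) l0 l Hc0 Hc) in Hk
      by (intros x E; rewrite E; simpl; ring).
    specialize (Psum y l).
    replace (sumR l (fun x => INR (y x) * x)) with (1/2 + IZR k) in Psum by lra.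
    rewrite Hpi, (fQ_compat _ _ (lam_half B lam HB Hb Hlam k)), fQ_odd in Psum. lra. }
  split; [|auto].
  split; auto.
  intros [pi' [[V0 V1] [Hne Hle]]]. apply Hne. apply functional_extensionality. intros x.
  set (y := fun t => ((if Req_EM_T t x then 1 else 0) + (if Req_EM_T t (1/2 - x) then 1 else 0))%nat).
  assert (Hge : pi' x + pi' (1/2 - x) >= 1).
  { destruct (Req_EM_T x (1/2 - x)) as [E|E].
    - assert (Hc : covers_support y [x]).
      { split. repeat constructor; simpl; tauto.
        intros t Ht. unfold y in Ht. destruct (Req_EM_T t x); [simpl; auto|].
        destruct (Req_EM_T t (1/2 - x)); [|simpl in Ht; lia]. subst t. congruence. }
      assert (Hy : y x = 2%nat).
      { unfold y. destruct (Req_EM_T x x); [|congruence].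
        destruct (Req_EM_T x (1/2 - x)); [reflexivity|congruence]. }
      assert (HI : in_Ib (1/2) y).
      { exists [x]. split; auto. exists 0%Z. simpl. rewrite Hy. simpl. lra. }
      specialize (V1 y HI [x] Hc). simpl in V1. rewrite Hy in V1. simpl in V1.
      rewrite <- E. lra.
    - assert (Hc : covers_support y [x; 1/2 - x]).
      { split. constructor. simpl; intros [H|[]]; auto. repeat constructor; simpl; tauto.
        intros t Ht. unfold y in Ht. destruct (Req_EM_T t x); [simpl; auto|].
        destruct (Req_EM_T t (1/2 - x)); [simpl; auto|simpl in Ht; lia]. }
      assert (Hy1 : y x = 1%nat).
      { unfold y. destruct (Req_EM_T x x); [|congruence].
        destruct (Req_EM_T x (1/2 - x)); [congruence|reflexivity]. }
      assert (Hy2 : y (1/2 - x) = 1%nat).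
      { unfold y. destruct (Req_EM_T (1/2 - x) x); [congruence|].
        destruct (Req_EM_T (1/2 - x) (1/2 - x)); [reflexivity|congruence]. }
      assert (HI : in_Ib (1/2) y).
      { exists [x; 1/2 - x]. split; auto. exists 0%Z. simpl. rewrite Hy1, Hy2. simpl. lra. }
      specialize (V1 y HI _ Hc). simpl in V1. rewrite Hy1, Hy2 in V1. simpl in V1. lra. }
  specialize (P2 x). pose proof (Hle x). pose proof (Hle (1/2 - x)). lra.
Qed.
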